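(* Let $k,n\ge 1$ and let $A$ be a $d\times d$ nonnegative matrix. Then $A\in P^*(k,n)$ if and only if $A\in P(k,n)$ and every $k$-tuple $(a_1,\dots,a_k)\in D^k$ has a common predecessor, i.e. there is $i\in D$ with $A(i,a_j)>0$ for all $j=1,\dots,k$.
   Context: Let $K=\{1,\dots,k\}$ and $D=\{1,\dots,d\}$. The $k$-tree $\tau$ is the set $K^*$ of all finite words over $K$; the empty word $\epsilon$ is the root, and for a word $x$ and $g\in K$ the word $xg$ is a child of $x$. $L_n$ denotes the set of words of length exactly $n$. Let $X_A=\{\lambda\in D^{\tau}: A(\lambda(x),\lambda(xg))>0 \text{ for all } x\in\tau,\ g\in K\}$. For $i\in D$ and $\mathcal T\subseteq\tau$, the arrival set is $\mathcal A(i,\epsilon,\mathcal T)=\{\lambda|_{\mathcal T}:\lambda\in X_A,\ \lambda(\epsilon)=i\}$. $A\in P(k,n)$ means $\mathcal A(i,\epsilon,L_n)=\mathcal A(j,\epsilon,L_n)$ for all $i,j\in D$. $A\in P^*(k,n)$ means $\mathcal A(i,\epsilon,L_n)=D^{L_n}$ for all $i\in D$. *)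

(* Defs.v *)
From mathcomp Require Import all_boot all_order all_algebra.
Unset Printing Implicit Defensive.
Import Order.TTheory GRing.Theory Num.Theory.
Local Open Scope ring_scope.

(* K = 'I_k, D = 'I_d.  The k-tree tau = K^* is seq 'I_k; root = [::];
   the child x g of x is rcons x g.  L_n = words of length n = n.-tuple 'I_k. *)

Section Defs.
Variables (R : numDomainType) (k d : nat).

Definition in_XA (A : 'M[R]_d) (lam : seq 'I_k -> 'I_d) : Prop :=
  forall (x : seq 'I_k) (g : 'I_k), 0 < A (lam x) (lam (rcons x g)).

Definition arrival (A : 'M[R]_d) (i : 'I_d) (n : nat)
    : {ffun n.-tuple 'I_k -> 'I_d} -> Prop :=
  fun f => exists lam, in_XA A lam /\ lam [::] = i /\
                      forall w : n.-tuple 'I_k, lam (tval w) = f w.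

Definition inP (A : 'M[R]_d) (n : nat) : Prop :=
  forall i j : 'I_d, forall f, arrival A i n f <-> arrival A j n f.

Definition inPstar (A : 'M[R]_d) (n : nat) : Prop :=
  forall i : 'I_d, forall f, arrival A i n f.
End Defs.
Arguments in_XA {R k d} A lam.
Arguments arrival {R} k {d} A i n f.
Arguments inP {R} k {d} A n.
Arguments inPstar {R} k {d} A n.

(* Main.v *)
Require Import Defs.
From mathcomp Require Import all_boot all_order all_algebra.
Import Order.TTheory GRing.Theory Num.Theory.
Local Open Scope ring_scope.

Lemma stab_chain (T : finType) (p : T -> T) :
  exists m, [set iter m.+1 p x | x : T] = [set iter m p x | x : T].
Proof.
set X := fun m => [set iter m p x | x : T].
have sub : forall m, X m.+1 \subset X m.
  move=> m; apply/subsetP=> y /imsetP [x _ ->].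
  by rewrite iterSr; apply/imsetP; exists (p x).
case: (boolP [exists m : 'I_(#|T|.+2), X m.+1 == X m]).
  by move/existsP=> [m /eqP Hm]; exists m.
move/existsPn=> H.
have key : forall m, (m <= #|T|.+1)%N -> (#|X m| + m <= #|T|)%N.
  elim=> [|m IH] Hm; first by rewrite addn0 max_card.
  have Hm' : (m < #|T|.+2)%N by apply: leq_trans Hm _.
  have := H (Ordinal Hm') => /= Hne.
  have: X m.+1 \proper X m by rewrite properEneq Hne sub.
  move/proper_card => lt.
  have := IH (ltnW Hm).
  rewrite addnS; apply: leq_trans; by rewrite ltn_add2r.
have := key #|T|.+1 (leqnn _).
by rewrite addnS ltnNge leq_addl.
Qed.

Section Build.
Variables (R : numDomainType) (k n d : nat) (A : 'M[R]_d).

Fixpoint Hlab (cp : ('I_k -> 'I_d) -> 'I_d) (i0 : 'I_d)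
   (f : {ffun n.-tuple 'I_k -> 'I_d}) (t : nat) (x : seq 'I_k) : 'I_d :=
  match t with
  | 0 => odflt i0 (omap f (insub x : option (n.-tuple 'I_k)))
  | t'.+1 => cp (fun g => Hlab cp i0 f t' (rcons x g))
  end.

Lemma build (sc : 'I_d -> 'I_d) (cp : ('I_k -> 'I_d) -> 'I_d) (i0 : 'I_d)
  (f : {ffun n.-tuple 'I_k -> 'I_d}) :
  (forall i, 0 < A i (sc i)) -> (forall a g, 0 < A (cp a) (a g)) ->
  exists j, arrival k A j n f.
Proof.
move=> Hsc Hcp.
pose L x := iter (size x - n) sc (Hlab cp i0 f (n - size x) (take n x)).
exists (L [::]), L; split; last split => //.
- move=> x g; rewrite /L size_rcons.
  case: (ltnP (size x) n) => Hx.
  + have -> : (size x - n = 0)%N by apply/eqP; rewrite subn_eq0 ltnW.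
    have -> : ((size x).+1 - n = 0)%N by apply/eqP; rewrite subn_eq0.
    rewrite !take_oversize ?size_rcons ?(ltnW Hx) //=.
    have -> : (n - size x = (n - (size x).+1).+1)%N by rewrite subnSK.
    by apply: Hcp.
  + have -> : ((size x).+1 - n = (size x - n).+1)%N by rewrite subSn.
    have -> : (n - (size x).+1 = 0)%N by apply/eqP; rewrite subn_eq0 leqW.
    have -> : (n - size x = 0)%N by apply/eqP; rewrite subn_eq0.
    rewrite -cats1 takel_cat //= iterS; exact: Hsc.
- move=> w; rewrite /L size_tuple subnn take_oversize ?size_tuple //=.
  by rewrite valK.
Qed.
End Build.

Theorem proposition2p6 (R : numDomainType) (k n d : nat) (A : 'M[R]_d) :
  (1 <= k)%N -> (1 <= n)%N -> (forall i j, 0 <= A i j) ->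
  (inPstar k A n <->
   (inP k A n /\
    forall a : 'I_k -> 'I_d, exists i : 'I_d, forall j : 'I_k, 0 < A i (a j))).
Proof.
move=> k1 n1 _; pose g0 : 'I_k := Ordinal k1; split.
- move=> HP; split; first by move=> i j f; split=> _; apply: HP.
  move=> a; pose f := [ffun w : n.-tuple 'I_k => a (last g0 w)].
  have [lam [Hlam [_ Hw]]] := HP (a g0) f.
  exists (lam (nseq n.-1 g0)) => g.
  have sz : size (rcons (nseq n.-1 g0) g) == n.
    by rewrite size_rcons size_nseq prednK.
  have := Hw (Tuple sz); rewrite /= ffunE /= last_rcons => <-.
  exact: Hlam.
- move=> [HP Hcp] i f.
  pose cp (a : 'I_k -> 'I_d) := odflt i [pick i' | [forall j, 0 < A i' (a j)]].
  have Hcp' : forall a g, 0 < A (cp a) (a g).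
    move=> a g; rewrite /cp; case: pickP => [i'' /forallP H //|].
    have [i' Hi'] := Hcp a; move=> /(_ i') /forallP; case; exact: Hi'.
  pose p b := cp (fun _ => b).
  have [m Hm] := @stab_chain _ p.
  set S := [set iter m p x | x : 'I_d] in Hm.
  have HS : forall y, y \in S -> exists2 z, z \in S & 0 < A y z.
    move=> y; rewrite -{1}Hm => /imsetP [x _ ->]; exists (iter m p x).
      by apply/imsetP; exists x.
    by rewrite iterS; apply: Hcp'.
  pose sc0 y := odflt y [pick z in S | 0 < A y z].
  have Hsc0 : forall y, y \in S -> sc0 y \in S /\ 0 < A y (sc0 y).
    move=> y yS; rewrite /sc0; case: pickP => [z /andP [] //|].
    have [z zS Az] := HS y yS; move=> /(_ z); by rewrite zS Az.
  pose s := iter m p i.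
  have sS : s \in S by apply/imsetP; exists i.
  have itS : forall t, iter t sc0 s \in S.
    by elim=> [//|t IH]; rewrite iterS; case: (Hsc0 _ IH).
  pose lam (x : seq 'I_k) := iter (size x) sc0 s.
  have goods : arrival k A s n [ffun w : n.-tuple 'I_k => lam w].
    exists lam; split; last split => //.
      move=> x g; rewrite /lam size_rcons iterS; by case: (Hsc0 _ (itS (size x))).
    by move=> w; rewrite ffunE.
  pose sc i' := odflt i' [pick j | 0 < A i' j].
  have Hsc : forall i', 0 < A i' (sc i').
    move=> i'; have [lam' [Hl [Hr _]]] := (HP i' s _).2 goods.
    have := Hl [::] g0; rewrite Hr /sc; case: pickP => [//|].
    by move=> /(_ (lam' (rcons [::] g0))) ->.
  have [j Hj] := @build _ _ _ _ A sc cp i f Hsc Hcp'.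
  exact: (HP i j f).2.
Qed.
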